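(* Let $D,\chi,\varepsilon,a>0$ and $\beta>0$, set $b=D\beta^2$, and assume $\omega^2:=\frac{a\chi}{D\varepsilon}-\beta^2>0$. Then there exist $\rho_0>0$, $\phi_0>0$, $r_0>0$ and functions $\rho\in C^0[0,\infty)$, $\phi\in C^2[0,\infty)$ with $\rho\ge 0$, $\phi\ge 0$, $\phi$ bounded, such that the function $p(\rho)=\frac{\varepsilon}{2}\rho^2$ is differentiable on $(0,\infty)$ and $$\partial_r\big(p(\rho)\big)=\chi\rho\,\phi_r,\qquad D\phi_{rr}+D\frac{\phi_r}{r}+a\rho-b\phi=0\quad\text{on }(0,\infty),$$ and moreover $\rho(0)=\rho_0$, $\phi(0)=\phi_0$, $\rho>0$ on $[0,r_0)$ and $\rho\equiv 0$ on $[r_0,\infty)$ (a ''half bump'' solution).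
   Context: This system is the radially symmetric stationary form (with zero velocity) of the hyperbolic-parabolic chemotaxis model $\rho_t+\mathrm{div}(\rho u)=0$, $(\rho u)_t+\mathrm{div}(\rho u\otimes u)+\nabla p(\rho)=\chi\rho\nabla\phi-\alpha\rho u$, $\delta\phi_t=D\Delta\phi+a\rho-b\phi$ on $\mathbb{R}^2$ with pressure $p(\rho)=\frac{\varepsilon}{2}\rho^2$; here $r=|x|$, $\rho(r)$ is cell density and $\phi(r)$ chemoattractant concentration. *)

(* Defs.v *)
From Stdlib Require Import Reals Lra.
From Coquelicot Require Import Coquelicot.
Open Scope R_scope.

Definition is_right_derive (f : R -> R) (x l : R) : Prop :=
  filterlim (fun h => (f (x + h) - f x) / h) (at_right 0) (locally l).

Definition C0_half (f : R -> R) : Prop :=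
  (forall x, 0 < x -> continuous f x) /\
  filterlim f (at_right 0) (locally (f 0)).

Definition C2_half (f : R -> R) : Prop :=
  exists d1 d2 : R -> R,
    (forall x, 0 < x -> is_derive f x (d1 x) /\ is_derive d1 x (d2 x)
                        /\ continuous d2 x) /\
    is_right_derive f 0 (d1 0) /\
    is_right_derive d1 0 (d2 0) /\
    filterlim d2 (at_right 0) (locally (d2 0)).

(* Main.v *)
Require Import Defs.
From Stdlib Require Import Reals Lra Lia Arith Factorial ZArith Classical.
From Coquelicot Require Import Coquelicot.
Open Scope R_scope.


Definition cB (sg : R) (k : nat) : R := sg ^ k / (INR (fact k)) ^ 2.
Definition F sg := PSeries (cB sg).
Definition Fd sg := PSeries (PS_derive (cB sg)).
Definition Fdd sg := PSeries (PS_derive (PS_derive (cB sg))).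

Lemma INR_fact_pos k : 0 < INR (fact k).
Proof. apply lt_0_INR, lt_O_fact. Qed.

Lemma cB_rad sg : Rabs sg = 1 -> CV_radius (cB sg) = p_infty.
Proof.
  intros Hs. apply CV_radius_infinite_DAlembert.
  - intros n. unfold cB. assert (0 < INR (fact n)) by apply INR_fact_pos.
    assert (sg <> 0) by (intro E; rewrite E, Rabs_R0 in Hs; lra).
    apply Rmult_integral_contrapositive; split.
    apply pow_nonzero; auto. apply Rinv_neq_0_compat; apply pow_nonzero; lra.
  - apply is_lim_seq_ext with (fun n => / (INR (S n))^2).
    + intros n. unfold cB. rewrite fact_simpl, mult_INR.
      assert (0 < INR (fact n)) by apply INR_fact_pos.
      assert (0 < INR (S n)) by (apply lt_0_INR; lia).
      assert (sg <> 0) by (intro E; rewrite E, Rabs_R0 in Hs; lra).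
      replace (sg ^ S n / (INR (S n) * INR (fact n)) ^ 2 / (sg ^ n / INR (fact n) ^ 2))
        with (sg / (INR (S n))^2).
      2:{ change (sg ^ S n) with (sg * sg ^ n). field. split; [|split]; try lra. apply pow_nonzero; auto. }
      unfold Rdiv. rewrite Rabs_mult, Hs, Rmult_1_l, Rabs_pos_eq; auto.
      apply Rlt_le, Rinv_0_lt_compat; nra.
    + apply is_lim_seq_le_le with (fun _ => 0) (fun n => / INR (S n)).
      * intros n. assert (1 <= INR (S n)) by (apply (le_INR 1); lia). split.
        apply Rlt_le, Rinv_0_lt_compat; nra.
        apply Rinv_le_contravar; nra.
      * apply is_lim_seq_const.
      * apply (is_lim_seq_incr_1 (fun n => / INR n)).
        replace (Finite 0) with (Rbar_inv p_infty) by reflexivity.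
        apply is_lim_seq_inv. apply is_lim_seq_INR. discriminate.
Qed.

Lemma rad_lt sg x : Rabs sg = 1 -> Rbar_lt (Rabs x) (CV_radius (cB sg)).
Proof. intros H; rewrite cB_rad; simpl; auto. Qed.
Lemma rad_lt' sg x : Rabs sg = 1 -> Rbar_lt (Rabs x) (CV_radius (PS_derive (cB sg))).
Proof. intros H; rewrite CV_radius_derive, cB_rad; simpl; auto. Qed.
Lemma rad_lt'' sg x : Rabs sg = 1 -> Rbar_lt (Rabs x) (CV_radius (PS_derive (PS_derive (cB sg)))).
Proof. intros H; rewrite !CV_radius_derive, cB_rad; simpl; auto. Qed.

Lemma F_deriv sg x : Rabs sg = 1 -> is_derive (F sg) x (Fd sg x).
Proof. intros H. apply is_derive_PSeries, rad_lt, H. Qed.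
Lemma Fd_deriv sg x : Rabs sg = 1 -> is_derive (Fd sg) x (Fdd sg x).
Proof. intros H. apply is_derive_PSeries, rad_lt', H. Qed.
Lemma Fdd_deriv sg x : Rabs sg = 1 -> ex_derive (Fdd sg) x.
Proof. intros H. eexists. apply is_derive_PSeries, rad_lt'', H. Qed.

Lemma plusR a b : plus a b = a + b. Proof. reflexivity. Qed.
Lemma scalR a b : scal a b = a * b. Proof. reflexivity. Qed.
Lemma zeroR : (zero : R) = 0. Proof. reflexivity. Qed.

Lemma F_ode sg x : Rabs sg = 1 -> x * Fdd sg x + Fd sg x = sg * F sg x.
Proof.
  intros H. unfold Fdd, Fd, F.
  rewrite <- PSeries_incr_1, <- PSeries_plus.
  2:{ apply CV_radius_inside. rewrite CV_radius_incr_1. apply rad_lt'', H. }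
  2:{ apply CV_radius_inside, rad_lt', H. }
  rewrite <- PSeries_scal. apply PSeries_ext. intros n.
  unfold PS_plus, PS_incr_1, PS_scal, PS_derive, cB.
  destruct n as [|n].
  - change (0 + INR 1 * (sg ^ 1 / INR (fact 1) ^ 2) = sg * (sg ^ 0 / INR (fact 0) ^ 2)).
    simpl. field.
  - change (INR (S n) * (INR (S (S n)) * (sg ^ S (S n) / INR (fact (S (S n))) ^ 2)) +
      INR (S (S n)) * (sg ^ S (S n) / INR (fact (S (S n))) ^ 2) = sg * (sg ^ S n / INR (fact (S n)) ^ 2)).
  - rewrite !fact_simpl, !mult_INR.
    assert (0 < INR (fact n)) by apply INR_fact_pos.
    change (sg ^ S (S n)) with (sg * (sg * sg ^ n)).
    change (sg ^ S n) with (sg * sg ^ n).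
    rewrite !S_INR. field. 
    assert (0 <= INR n) by apply pos_INR. lra.
Qed.


Definition U sg x := F sg (x^2/4).
Definition U1 sg x := Fd sg (x^2/4) * (x/2).
Definition U2 sg x := Fdd sg (x^2/4) * (x/2) * (x/2) + Fd sg (x^2/4) / 2.

Lemma sq4_deriv x : is_derive (fun x => x^2/4) x (x/2).
Proof. auto_derive; auto. field. Qed.

Lemma U_deriv sg x : Rabs sg = 1 -> is_derive (U sg) x (U1 sg x).
Proof.
  intros H. unfold U, U1.
  eapply is_derive_ext. { intros t; reflexivity. }
  pose proof (is_derive_comp (F sg) (fun x => x^2/4) x _ _ (F_deriv sg (x^2/4) H) (sq4_deriv x)).
  rewrite scalR in H0. rewrite Rmult_comm. exact H0.
Qed.

Lemma U1_deriv sg x : Rabs sg = 1 -> is_derive (U1 sg) x (U2 sg x).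
Proof.
  intros H. unfold U1, U2.
  pose proof (is_derive_comp (Fd sg) (fun x => x^2/4) x _ _ (Fd_deriv sg (x^2/4) H) (sq4_deriv x)).
  rewrite scalR in H0.
  assert (H1 : is_derive (fun x => x/2) x (1/2)) by (auto_derive; auto; field).
  pose proof (is_derive_mult _ _ x _ _ H0 H1 (fun a b => Rmult_comm a b)).
  eapply is_derive_ext; [intros t; reflexivity|].
  replace (Fdd sg (x ^ 2 / 4) * (x / 2) * (x / 2) + Fd sg (x ^ 2 / 4) / 2)
    with (plus (mult (x / 2 * Fdd sg (x ^ 2 / 4)) (x / 2)) (mult (Fd sg (x ^ 2 / 4)) (1 / 2))).
  exact H2. change (plus ?a ?b) with (a + b). change (mult ?a ?b) with (a * b). match goal with |- ?a = ?b => change (@eq R a b) end; field.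
Qed.

Lemma cpt_of_derive f x l : is_derive f x l -> continuity_pt f x.
Proof. intros H. apply continuity_pt_filterlim, (ex_derive_continuous f x). exists l; auto. Qed.

Lemma U2_cont_pt sg x : Rabs sg = 1 -> continuity_pt (U2 sg) x.
Proof.
  intros H. unfold U2.
  assert (Hs : forall y, continuity_pt (fun x => x^2/4) y).
  { intros y. eapply cpt_of_derive, sq4_deriv. }
  assert (Hl : forall y, continuity_pt (fun x => x/2) y).
  { intros y. apply (cpt_of_derive _ _ (1/2)). auto_derive; auto. }
  apply continuity_pt_plus.
  - apply continuity_pt_mult; auto. apply continuity_pt_mult; auto.
    apply (continuity_pt_comp (fun x => x^2/4) (Fdd sg)); auto.
    destruct (Fdd_deriv sg (x^2/4) H) as [l Hl']. eapply cpt_of_derive; eauto.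
  - apply (continuity_pt_mult (fun x => Fd sg (x^2/4)) (fun _ => /2)).
    apply (continuity_pt_comp (fun x => x^2/4) (Fd sg)); auto.
    eapply cpt_of_derive, Fd_deriv, H.
    apply continuity_pt_const. intros a b; auto.
Qed.

Lemma U2_cont sg x : Rabs sg = 1 -> continuous (U2 sg) x.
Proof. intros H. apply continuity_pt_filterlim, U2_cont_pt, H. Qed.

Lemma U_ode sg x : Rabs sg = 1 -> x <> 0 -> U2 sg x = sg * U sg x - U1 sg x / x.
Proof.
  intros H Hx. unfold U2, U, U1.
  pose proof (F_ode sg (x^2/4) H).
  replace (Fdd sg (x ^ 2 / 4) * (x / 2) * (x / 2)) with ((x^2/4) * Fdd sg (x^2/4)) by (field).
  replace (Fd sg (x ^ 2 / 4) * (x / 2) / x) with (Fd sg (x^2/4) / 2) by (field; auto).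
  lra.
Qed.


Lemma tail_bound (a : nat -> R) n q : (0 < n)%nat -> 0 <= q < 1 ->
  (forall k, (n <= k)%nat -> Rabs (a (S k)) <= q * Rabs (a k)) -> ex_series a ->
  Rabs (Series a - sum_f_R0 a (pred n)) <= Rabs (a n) / (1 - q).
Proof.
  intros Hn Hq Hr Hex. rewrite (Series_incr_n a n Hn Hex).
  replace (sum_f_R0 a (Init.Nat.pred n) + Series (fun k => a (n + k)%nat) - sum_f_R0 a (Init.Nat.pred n))
    with (Series (fun k => a (n + k)%nat)) by ring.
  assert (Hb : forall k, Rabs (a (n + k)%nat) <= Rabs (a n) * q ^ k).
  { induction k. rewrite Nat.add_0_r; simpl; lra.
    rewrite Nat.add_succ_r. eapply Rle_trans. apply Hr; lia.
    simpl. nra. }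
  assert (Hg : is_series (fun k => Rabs (a n) * q ^ k) (Rabs (a n) * / (1 - q))).
  { apply (is_series_scal_l (Rabs (a n)) (fun k => q^k)). apply is_series_geom.
    rewrite Rabs_pos_eq; lra. }
  assert (Hex2 : ex_series (fun k => Rabs (a (n + k)%nat))).
  { eapply (@ex_series_le R_AbsRing R_CompleteNormedModule); [|eexists; exact Hg]. intros k. 
    change (norm (Rabs (a (n+k)%nat))) with (Rabs (Rabs (a (n+k)%nat))).
    rewrite Rabs_Rabsolu. apply Hb. }
  eapply Rle_trans. apply Series_Rabs, Hex2.
  unfold Rdiv. rewrite <- (is_series_unique _ _ Hg).
  apply Series_le; [|eexists; exact Hg]. intros k; split; [apply Rabs_pos| apply Hb].
Qed.

Lemma cB_abs_S sg k : Rabs sg = 1 -> Rabs (cB sg (S k)) = Rabs (cB sg k) / (INR (S k))^2.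
Proof.
  intros H. unfold cB. rewrite fact_simpl, mult_INR.
  assert (0 < INR (fact k)) by apply INR_fact_pos.
  assert (0 < INR (S k)) by (apply lt_0_INR; lia).
  unfold Rdiv. rewrite !Rabs_mult, !Rabs_inv, <- !RPow_abs, H, !pow1.
  rewrite Rabs_mult, !Rabs_pos_eq by lra.
  field. lra.
Qed.

Lemma ex_ps (c : nat -> R) z : Rbar_lt (Rabs z) (CV_radius c) -> ex_series (fun k => c k * z ^ k).
Proof.
  intros H. pose proof (CV_radius_inside c z H) as E. unfold ex_pseries in E.
  eapply ex_series_ext; [|exact E]. intros k. rewrite scalR, pow_n_pow. apply Rmult_comm.
Qed.

Lemma dcoef_ratio sg k z : Rabs sg = 1 ->
  Rabs (PS_derive (cB sg) (S k) * z ^ S k) = Rabs (PS_derive (cB sg) k * z ^ k) * (Rabs z / (INR (S k) * INR (S (S k)))).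
Proof.
  intros H. unfold PS_derive. rewrite !Rabs_mult.
  rewrite (cB_abs_S sg (S k) H).
  assert (0 < INR (S k)) by (apply lt_0_INR; lia).
  assert (0 < INR (S (S k))) by (apply lt_0_INR; lia).
  rewrite !(Rabs_pos_eq (INR _)) by lra.
  change (z ^ S k) with (z * z ^ k). rewrite Rabs_mult. field. lra.
Qed.

Lemma coef_ratio sg k z : Rabs sg = 1 ->
  Rabs (cB sg (S k) * z ^ S k) = Rabs (cB sg k * z ^ k) * (Rabs z / (INR (S k))^2).
Proof.
  intros H. rewrite !Rabs_mult, (cB_abs_S sg k H).
  assert (0 < INR (S k)) by (apply lt_0_INR; lia).
  change (z ^ S k) with (z * z ^ k). rewrite Rabs_mult. field. lra.
Qed.

Lemma num_bound (a : nat -> R) n q B : (0 < n)%nat -> 0 <= q < 1 ->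
  (forall k, (n <= k)%nat -> Rabs (a (S k)) <= q * Rabs (a k)) -> ex_series a ->
  Rabs (a n) <= B ->
  sum_f_R0 a (pred n) - B / (1 - q) <= Series a <= sum_f_R0 a (pred n) + B / (1 - q).
Proof.
  intros H1 H2 H3 H4 H5. pose proof (tail_bound a n q H1 H2 H3 H4) as T.
  apply Rabs_le_between in T.
  assert (Rabs (a n) / (1 - q) <= B / (1 - q)).
  { unfold Rdiv. apply Rmult_le_compat_r; auto. apply Rlt_le, Rinv_0_lt_compat; lra. }
  lra.
Qed.

Lemma Rabs_m1 : Rabs (-1) = 1.
Proof. unfold Rabs; destruct Rcase_abs; lra. Qed.

Lemma N1 z : 0 <= z <= 2 -> Fd (-1) z < 0.
Proof.
  intros Hz. unfold Fd, PSeries.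
  assert (Hr := Rabs_m1).
  assert (Hq : forall k, (4 <= k)%nat -> Rabs (PS_derive (cB (-1)) (S k) * z ^ S k) <=
     1/10 * Rabs (PS_derive (cB (-1)) k * z ^ k)).
  { intros k Hk. rewrite dcoef_ratio by auto.
    assert (4 <= INR k) by (apply (le_INR 4) in Hk; simpl in Hk; lra).
    rewrite !S_INR. rewrite (Rabs_pos_eq z) by lra.
    assert (0 <= Rabs (PS_derive (cB (-1)) k * z ^ k)) by apply Rabs_pos.
    assert (z / ((INR k + 1) * (INR k + 1 + 1)) <= 1/10).
    { set (d := (INR k + 1) * (INR k + 1 + 1)). assert (30 <= d) by (unfold d; nra).
      assert (0 < / d <= / 30) by (split; [apply Rinv_0_lt_compat; lra| apply Rinv_le_contravar; lra]).
      unfold Rdiv. nra. }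
    nra. }
  assert (H4 : z^4 <= 16) by (replace 16 with (2^4) by ring; apply pow_incr; lra).
  assert (HB : Rabs (PS_derive (cB (-1)) 4 * z ^ 4) <= 16/2880).
  { unfold PS_derive, cB. rewrite Rabs_mult, (Rabs_pos_eq (z^4)) by (apply pow_le; lra).
    replace (INR 5 * ((-1) ^ 5 / INR (fact 5) ^ 2)) with (-(1/2880)).
    rewrite Rabs_Ropp, Rabs_pos_eq by lra. lra.
    simpl. field. }
  pose proof (num_bound _ 4 (1/10) _ ltac:(lia) ltac:(lra) Hq (ex_ps _ z (rad_lt' (-1) z Hr)) HB) as T.
  destruct T as [_ T]. eapply Rle_lt_trans; [exact T|].
  simpl pred. unfold PS_derive, cB. simpl. 
  nra.
Qed.

Lemma factS n : INR (fact (S n)) = INR (S n) * INR (fact n).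
Proof. rewrite fact_simpl, mult_INR. reflexivity. Qed.

Lemma N2 : F (-1) (49/25) < 0.
Proof.
  unfold F, PSeries. assert (Hr := Rabs_m1). set (z := 49/25).
  assert (Hq : forall k, (6 <= k)%nat -> Rabs (cB (-1) (S k) * z ^ S k) <=
     1/10 * Rabs (cB (-1) k * z ^ k)).
  { intros k Hk. rewrite coef_ratio by auto.
    assert (6 <= INR k) by (apply (le_INR 6) in Hk; simpl in Hk; lra).
    rewrite !S_INR. rewrite (Rabs_pos_eq z) by (unfold z; lra).
    assert (0 <= Rabs (cB (-1) k * z ^ k)) by apply Rabs_pos.
    assert (z / (INR k + 1)^2 <= 1/10).
    { set (d := (INR k + 1)^2). assert (49 <= d) by (unfold d; nra).
      assert (0 < / d <= / 49) by (split; [apply Rinv_0_lt_compat; lra| apply Rinv_le_contravar; lra]).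
      unfold Rdiv, z. nra. }
    nra. }
  assert (HB : Rabs (cB (-1) 6 * z ^ 6) <= 1/8000).
  { unfold cB, z. rewrite !factS. rewrite Rabs_pos_eq; simpl; lra. }
  pose proof (num_bound _ 6 (1/10) _ ltac:(lia) ltac:(lra) Hq (ex_ps _ z (rad_lt (-1) z Hr)) HB) as T.
  destruct T as [_ T]. eapply Rle_lt_trans; [exact T|].
  simpl pred. simpl sum_f_R0. unfold cB, z. rewrite !factS. simpl. lra.
Qed.

Lemma N3 : 0 < Fd (-1) 4.
Proof.
  unfold Fd, PSeries. assert (Hr := Rabs_m1). set (z := 4).
  assert (Hq : forall k, (8 <= k)%nat -> Rabs (PS_derive (cB (-1)) (S k) * z ^ S k) <=
     1/10 * Rabs (PS_derive (cB (-1)) k * z ^ k)).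
  { intros k Hk. rewrite dcoef_ratio by auto.
    assert (8 <= INR k) by (apply (le_INR 8) in Hk; simpl in Hk; lra).
    rewrite !S_INR. rewrite (Rabs_pos_eq z) by (unfold z; lra).
    assert (0 <= Rabs (PS_derive (cB (-1)) k * z ^ k)) by apply Rabs_pos.
    assert (z / ((INR k + 1) * (INR k + 1 + 1)) <= 1/10).
    { set (d := (INR k + 1) * (INR k + 1 + 1)). assert (90 <= d) by (unfold d; nra).
      assert (0 < / d <= / 90) by (split; [apply Rinv_0_lt_compat; lra| apply Rinv_le_contravar; lra]).
      unfold Rdiv, z. nra. }
    nra. }
  assert (HB : Rabs (PS_derive (cB (-1)) 8 * z ^ 8) <= 1/100000).
  { unfold PS_derive, cB, z. rewrite !factS. rewrite Rabs_left; simpl; lra. }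
  pose proof (num_bound _ 8 (1/10) _ ltac:(lia) ltac:(lra) Hq (ex_ps _ z (rad_lt' (-1) z Hr)) HB) as T.
  destruct T as [T _]. eapply Rlt_le_trans; [|exact T].
  simpl pred. simpl sum_f_R0. unfold PS_derive, cB, z. rewrite !factS. simpl. lra.
Qed.


Lemma cpt_eps f x : continuity_pt f x -> forall e, 0 < e -> exists d, 0 < d /\ forall y, Rabs (y - x) < d -> Rabs (f y - f x) < e.
Proof.
  intros H e He. destruct (H e He) as [d [Hd Hy]]. exists d; split; auto.
  intros y Hyx. destruct (Req_dec y x) as [->|Hne].
  - rewrite Rminus_diag, Rabs_R0; auto.
  - apply (Hy y). split. split. exact I. auto. exact Hyx.
Qed.

Lemma first_zero f a b : a < b -> (forall x, a <= x <= b -> continuity_pt f x) -> f a < 0 -> 0 < f b ->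
  exists c, a < c < b /\ f c = 0 /\ forall x, a <= x < c -> f x < 0.
Proof.
  intros Hab Hc Ha Hb.
  set (E := fun x => a <= x <= b /\ forall t, a <= t <= x -> f t < 0).
  assert (Hbd : bound E) by (exists b; intros x [Hx _]; lra).
  assert (Hne : exists x, E x) by (exists a; split; [lra| intros t Ht; replace t with a by lra; auto]).
  destruct (completeness E Hbd Hne) as [c [Hub Hlub]].
  assert (Hac : a <= c) by (apply Hub; destruct Hne as [x Hx]; split; [lra|]; intros t Ht; replace t with a by lra; auto).
  assert (Hcb : c <= b) by (apply Hlub; intros x [Hx _]; lra).
  assert (A : forall t, a <= t < c -> f t < 0).
  { intros t Ht. destruct (Rle_dec c t) as [Hct|Hct]; [lra|].
    assert (~ is_upper_bound E t).
    { intros Hu. specialize (Hlub t Hu). lra. }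
    apply not_all_ex_not in H. destruct H as [x Hx].
    apply imply_to_and in Hx. destruct Hx as [[Hx1 Hx2] Hx3].
    apply Hx2. lra. }
  assert (Hfc : f c = 0).
  { destruct (Rtotal_order (f c) 0) as [Hlt|[Heq|Hgt]]; auto; exfalso.
    - destruct (cpt_eps f c (Hc c ltac:(lra)) (- f c) ltac:(lra)) as [d [Hd Hy]].
      assert (c < b) by (destruct (Req_dec c b); [subst; lra| lra]).
      set (y := Rmin (c + d/2) b).
      assert (Ey : E y).
      { split. unfold y; split; [apply Rmin_glb; lra| apply Rmin_r].
        intros t Ht. destruct (Rlt_dec t c). apply A; lra.
        assert (Htc : Rabs (t - c) < d).
        { assert (y <= c + d/2) by apply Rmin_l. rewrite Rabs_pos_eq; lra. }
        specialize (Hy t Htc). apply Rabs_lt_between in Hy. lra. }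
      specialize (Hub y Ey). assert (c < y) by (unfold y; apply Rmin_glb_lt; lra). lra.
    - destruct (cpt_eps f c (Hc c ltac:(lra)) (f c) ltac:(lra)) as [d [Hd Hy]].
      assert (a < c) by (destruct (Req_dec a c); [subst; lra| lra]).
      set (t := Rmax a (c - d/2)).
      assert (Ht : a <= t < c) by (unfold t; split; [apply Rmax_l| apply Rmax_lub_lt; lra]).
      assert (Htc : Rabs (t - c) < d).
      { assert (c - d/2 <= t) by apply Rmax_r. rewrite Rabs_left; lra. }
      specialize (Hy t Htc). apply Rabs_lt_between in Hy. specialize (A t Ht). lra. }
  exists c. split; [|split; auto].
  split; [destruct (Req_dec a c); [subst; lra|lra] | destruct (Req_dec c b); [subst; lra|lra]].
Qed.


Lemma strict_decr f df x1 : (forall x, is_derive f x (df x)) ->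
  (forall x, 0 < x < x1 -> df x < 0) -> (forall x, 0 <= x <= x1 -> df x <= 0) ->
  forall p q, 0 <= p < q -> q <= x1 -> f q < f p.
Proof.
  intros Hd Hneg Hle p q Hpq Hq.
  assert (Hc : forall x, continuity_pt f x) by (intros x; eapply cpt_of_derive, Hd).
  assert (M : forall a b, a < b -> exists c, a <= c <= b /\ f b - f a = df c * (b - a)).
  { intros a b Hab. destruct (MVT_gen f a b df) as [c [Hc1 Hc2]].
    intros; apply Hd. intros; apply Hc.
    exists c. rewrite Rmin_left, Rmax_right in Hc1 by lra. auto. }
  set (m1 := p + (q - p)/3). set (m2 := p + 2*(q-p)/3).
  destruct (M p m1) as [c1 [H1 E1]]. unfold m1; lra.
  destruct (M m1 m2) as [c2 [H2 E2]]. unfold m1, m2; lra.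
  destruct (M m2 q) as [c3 [H3 E3]]. unfold m2; lra.
  assert (df c1 <= 0) by (apply Hle; unfold m1 in *; lra).
  assert (df c3 <= 0) by (apply Hle; unfold m2 in *; lra).
  assert (df c2 < 0) by (apply Hneg; unfold m1, m2 in *; lra).
  assert (0 < m1 - p) by (unfold m1; lra).
  assert (0 < m2 - m1) by (unfold m1, m2; lra).
  assert (0 < q - m2) by (unfold m2; lra).
  nra.
Qed.

Lemma Rabs_m1' : Rabs (-1) = 1.
Proof. apply Rabs_m1. Qed.

Lemma J0_facts : exists x0 x1, 0 < x0 < x1 /\ U (-1) x0 = 0 /\ U1 (-1) x1 = 0 /\
  (forall x, 0 < x < x1 -> U1 (-1) x < 0) /\
  (forall p q, 0 <= p < q -> q <= x1 -> U (-1) q < U (-1) p).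
Proof.
  assert (Hr := Rabs_m1).
  set (w := fun x => Fd (-1) (x^2/4)).
  assert (Hwc : forall x, continuity_pt w x).
  { intros x. unfold w. apply (continuity_pt_comp (fun x => x^2/4) (Fd (-1))).
    eapply cpt_of_derive, sq4_deriv. eapply cpt_of_derive, Fd_deriv, Hr. }
  assert (Hw0 : forall x, 0 <= x <= 14/5 -> w x < 0).
  { intros x Hx. unfold w. apply N1. assert (x^2 <= 8) by (simpl; nra). assert (0 <= x^2) by (simpl; nra). lra. }
  assert (Hw4 : 0 < w 4) by (unfold w; replace (4^2/4) with 4 by field; apply N3).
  destruct (first_zero w (14/5) 4 ltac:(lra) (fun x _ => Hwc x) (Hw0 (14/5) ltac:(lra)) Hw4)
    as [x1 [Hx1 [Hwx1 Hwlt]]].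
  assert (Hwneg : forall x, 0 <= x < x1 -> w x < 0).
  { intros x Hx. destruct (Rle_dec x (14/5)). apply Hw0; lra. apply Hwlt; lra. }
  assert (HU1 : forall x, U1 (-1) x = w x * (x/2)) by reflexivity.
  assert (Hdec : forall p q, 0 <= p < q -> q <= x1 -> U (-1) q < U (-1) p).
  { apply (strict_decr _ (U1 (-1))).
    intros x; apply U_deriv, Hr.
    intros x Hx. rewrite HU1. assert (w x < 0) by (apply Hwneg; lra). nra.
    intros x Hx. rewrite HU1. destruct (Req_dec x x1). subst; rewrite Hwx1; lra.
    assert (w x < 0) by (apply Hwneg; lra). nra. }
  assert (HUc : continuity (fun x => - U (-1) x)).
  { intros x. apply continuity_pt_opp. eapply cpt_of_derive, U_deriv, Hr. }
  assert (HU0 : U (-1) 0 = 1).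
  { unfold U. replace (0^2/4) with 0 by field. unfold F. rewrite PSeries_0. unfold cB. simpl. field. }
  assert (HUe : U (-1) (14/5) < 0).
  { unfold U. replace ((14/5)^2/4) with (49/25) by field. apply N2. }
  destruct (IVT (fun x => - U (-1) x) 0 (14/5) HUc ltac:(lra) ltac:(lra) ltac:(lra)) as [x0 [Hx0 HUx0]].
  exists x0, x1. 
  assert (x0 <> 0) by (intro E; subst; lra).
  assert (x0 <> 14/5) by (intro E; subst; lra).
  repeat split; try lra.
  rewrite HU1, Hwx1; ring.
  intros x Hx. rewrite HU1. assert (w x < 0) by (apply Hwneg; lra). nra.
  exact Hdec.
Qed.


Lemma Series_nonneg (a : nat -> R) : (forall k, 0 <= a k) -> ex_series a -> 0 <= Series a.
Proof.
  intros H Hex. assert (E : Series (fun _ => 0) = 0).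
  { rewrite (Series_ext _ (fun k => (fun _ => 0) k * 1 ^ k)). apply PSeries_const_0. intros; ring. }
  rewrite <- E. apply Series_le; auto. intros; split; [lra| auto].
Qed.

Lemma ps_ge_c0 c z : (forall k, 0 <= c k) -> 0 <= z -> ex_series (fun k => c k * z ^ k) -> c 0%nat <= PSeries c z.
Proof.
  intros Hc Hz Hex. unfold PSeries. rewrite Series_incr_1 by auto.
  assert (0 <= Series (fun k => c (S k) * z ^ S k)).
  { apply Series_nonneg. intros k; apply Rmult_le_pos; auto; apply pow_le; auto.
    apply (ex_series_incr_1 (fun k => c k * z ^ k)); auto. }
  change (z ^ 0) with 1. lra.
Qed.

Lemma ps_mono c z1 z2 : (forall k, 0 <= c k) -> 0 <= z1 <= z2 -> ex_series (fun k => c k * z2 ^ k) ->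
  PSeries c z1 <= PSeries c z2.
Proof.
  intros Hc Hz Hex. unfold PSeries. apply Series_le; auto. intros k; split.
  apply Rmult_le_pos; auto; apply pow_le; lra.
  apply Rmult_le_compat_l; auto. apply pow_incr; lra.
Qed.

Lemma Rabs_1 : Rabs 1 = 1. Proof. apply Rabs_R1. Qed.

Lemma cB1_nonneg k : 0 <= cB 1 k.
Proof. unfold cB. rewrite pow1. apply Rlt_le, Rdiv_lt_0_compat; [lra| apply pow_lt, INR_fact_pos]. Qed.
Lemma dcB1_nonneg k : 0 <= PS_derive (cB 1) k.
Proof. unfold PS_derive. apply Rmult_le_pos; [apply pos_INR| apply cB1_nonneg]. Qed.

Lemma F1_ge1 z : 0 <= z -> 1 <= F 1 z.
Proof.
  intros Hz. replace 1 with (cB 1 0) at 1 by (unfold cB; simpl; field).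
  apply ps_ge_c0; auto. apply cB1_nonneg. apply ex_ps, rad_lt, Rabs_1.
Qed.
Lemma Fd1_ge1 z : 0 <= z -> 1 <= Fd 1 z.
Proof.
  intros Hz. replace 1 with (PS_derive (cB 1) 0) at 1 by (unfold PS_derive, cB; simpl; field).
  apply ps_ge_c0; auto. apply dcB1_nonneg. apply ex_ps, rad_lt', Rabs_1.
Qed.
Lemma F1_mono z1 z2 : 0 <= z1 <= z2 -> F 1 z1 <= F 1 z2.
Proof. intros; apply ps_mono; auto. apply cB1_nonneg. apply ex_ps, rad_lt, Rabs_1. Qed.
Lemma Fd1_mono z1 z2 : 0 <= z1 <= z2 -> Fd 1 z1 <= Fd 1 z2.
Proof. intros; apply ps_mono; auto. apply dcB1_nonneg. apply ex_ps, rad_lt', Rabs_1. Qed.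

Lemma I0_ge1 x : 1 <= U 1 x.
Proof. apply F1_ge1. assert (0 <= x^2) by (simpl; nra). lra. Qed.
Lemma I0_pos x : 0 < U 1 x.
Proof. pose proof (I0_ge1 x); lra. Qed.
Lemma I0'_pos x : 0 < x -> 0 < U1 1 x.
Proof. intros Hx. unfold U1. pose proof (Fd1_ge1 (x^2/4) ltac:(assert (0 <= x^2) by (simpl; nra); lra)). nra. Qed.
Lemma I0_mono x y : 0 <= x <= y -> U 1 x <= U 1 y.
Proof. intros H. apply F1_mono. assert (x^2 <= y^2) by (simpl; nra). assert (0 <= x^2) by (simpl; nra). lra. Qed.
Lemma xI0'_mono x y : 0 <= x <= y -> x * U1 1 x <= y * U1 1 y.
Proof.
  intros H. unfold U1.
  assert (x^2 <= y^2) by (simpl; nra). assert (0 <= x^2) by (simpl; nra).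
  pose proof (Fd1_mono (x^2/4) (y^2/4) ltac:(lra)).
  pose proof (Fd1_ge1 (x^2/4) ltac:(lra)).
  replace (x * (Fd 1 (x ^ 2 / 4) * (x / 2))) with (Fd 1 (x ^ 2 / 4) * (x^2/2)) by (simpl; field).
  replace (y * (Fd 1 (y ^ 2 / 4) * (y / 2))) with (Fd 1 (y ^ 2 / 4) * (y^2/2)) by (simpl; field).
  apply Rmult_le_compat; lra.
Qed.


Definition I0 := U 1.
Definition I0' := U1 1.
Definition h t := / (t * I0 t ^ 2).
Definition k t := I0' t / I0 t ^ 2.
Definition Kf t := - / I0 t.

Lemma I0_cpt t : continuity_pt I0 t.
Proof. eapply cpt_of_derive, U_deriv, Rabs_1. Qed.
Lemma I0'_cpt t : continuity_pt I0' t.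
Proof. eapply cpt_of_derive, U1_deriv, Rabs_1. Qed.

Lemma cpt_sq f t : continuity_pt f t -> continuity_pt (fun t => f t ^ 2) t.
Proof.
  intros H. apply (continuity_pt_comp f (fun x => x^2)); auto.
  apply (cpt_of_derive _ _ (2 * f t)). auto_derive; auto. ring.
Qed.

Lemma h_cpt t : 0 < t -> continuity_pt h t.
Proof.
  intros Ht. unfold h.
  apply (continuity_pt_inv (fun t => t * I0 t ^ 2)).
  apply continuity_pt_mult. apply continuity_pt_id.
  apply (cpt_sq I0 t), I0_cpt.
  pose proof (I0_pos t). unfold I0 in *. apply Rgt_not_eq. apply Rmult_lt_0_compat; auto; apply pow_lt; auto.
Qed.
Lemma h_cont t : 0 < t -> continuous h t.
Proof. intros; apply continuity_pt_filterlim, h_cpt; auto. Qed.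
Lemma h_pos t : 0 < t -> 0 < h t.
Proof. intros Ht. unfold h. pose proof (I0_pos t). apply Rinv_0_lt_compat, Rmult_lt_0_compat; auto; apply pow_lt; auto. Qed.

Lemma ex_RInt_h x y : 0 < x -> 0 < y -> ex_RInt h x y.
Proof.
  intros Hx Hy. apply (@ex_RInt_continuous R_CompleteNormedModule). intros z Hz. apply h_cont.
  assert (0 < Rmin x y) by (apply Rmin_glb_lt; auto). lra.
Qed.

Lemma k_cont t : continuous k t.
Proof.
  apply continuity_pt_filterlim. unfold k.
  apply continuity_pt_div. apply I0'_cpt. apply (cpt_sq I0 t), I0_cpt.
  pose proof (I0_pos t). unfold I0 in *. apply Rgt_not_eq, pow_lt; auto.
Qed.

Lemma Kf_deriv t : is_derive Kf t (k t).
Proof.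
  unfold Kf, k. pose proof (I0_pos t).
  pose proof (is_derive_inv I0 t _ (U_deriv 1 t Rabs_1) ltac:(unfold I0 in *; lra)).
  pose proof (is_derive_opp _ _ _ H0).
  replace (I0' t / I0 t ^ 2) with (opp (- U1 1 t / I0 t ^ 2)).
  eapply is_derive_ext; [|exact H1]. intros; reflexivity.
  unfold I0'. change (opp ?a) with (- a). match goal with |- ?a = ?b => change (@eq R a b) end. unfold Rdiv. ring.
Qed.

Lemma RInt_k x y : RInt k x y = Kf y - Kf x.
Proof.
  apply is_RInt_unique.
  apply (@is_RInt_derive R_CompleteNormedModule Kf k x y).
  intros; apply Kf_deriv. intros; apply k_cont.
Qed.

Lemma k_cpt t : continuity_pt k t.
Proof. apply continuity_pt_filterlim, k_cont. Qed.

Lemma RInt_ck c x y : RInt (fun t => c * k t) x y = c * Kf y - c * Kf x.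
Proof.
  apply is_RInt_unique.
  apply (@is_RInt_derive R_CompleteNormedModule (fun t => c * Kf t) (fun t => c * k t) x y).
  intros; apply is_derive_scal, Kf_deriv.
  intros. apply continuity_pt_filterlim. apply (continuity_pt_mult (fun _ => c) k).
  apply continuity_pt_const; intros a b; auto. apply k_cpt.
Qed.

Lemma ex_RInt_ck c x y : ex_RInt (fun t => c * k t) x y.
Proof.
  apply (@ex_RInt_continuous R_CompleteNormedModule). intros.
  apply continuity_pt_filterlim. apply (continuity_pt_mult (fun _ => c) k).
  apply continuity_pt_const; intros a b; auto. apply k_cpt.
Qed.

Lemma key_ineq x y : 0 < x <= y -> RInt h x y <= / (x * I0' x * I0 x).
Proof.
  intros Hxy. set (c := / (x * I0' x)).
  pose proof (I0'_pos x ltac:(lra)) as Hp. pose proof (I0_pos x) as Hi.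
  fold I0' I0 in Hp, Hi.
  assert (Hc : 0 < c) by (unfold c; apply Rinv_0_lt_compat, Rmult_lt_0_compat; lra).
  eapply Rle_trans.
  apply (RInt_le h (fun t => c * k t) x y ltac:(lra)).
  apply ex_RInt_h; lra.
  apply ex_RInt_ck.
  { intros t Ht. unfold h, k, c.
    pose proof (xI0'_mono x t ltac:(lra)) as Hm. fold I0' in Hm.
    pose proof (I0_pos t) as Ht0. fold I0 in Ht0.
    assert (HA : 0 < I0 t ^ 2) by (apply pow_lt; auto).
    assert (0 < t) by lra.
    assert (0 < / (t * I0 t ^ 2)) by (apply Rinv_0_lt_compat, Rmult_lt_0_compat; lra).
    replace (/ (x * I0' x) * (I0' t / I0 t ^ 2)) with ((t * I0' t) / (x * I0' x) * / (t * I0 t ^ 2))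
      by (field; repeat split; lra).
    assert (1 <= t * I0' t / (x * I0' x)).
    { unfold Rdiv. apply Rmult_le_reg_r with (x * I0' x). apply Rmult_lt_0_compat; lra.
      rewrite Rmult_assoc, Rinv_l, Rmult_1_r, Rmult_1_l. lra. apply Rgt_not_eq, Rmult_lt_0_compat; lra. }
    rewrite <- (Rmult_1_l (/ (t * I0 t ^ 2))) at 1. apply Rmult_le_compat_r; lra. }
  rewrite RInt_ck. unfold Kf, c.
  pose proof (I0_pos y). fold I0 in H.
  assert (0 < / I0 y) by (apply Rinv_0_lt_compat; auto).
  rewrite (Rinv_mult (x * I0' x)).
  assert (0 < / (x * I0' x)) by (apply Rinv_0_lt_compat, Rmult_lt_0_compat; lra).
  assert (/ (x * I0' x) * / I0 y > 0) by (apply Rmult_lt_0_compat; lra).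
  lra.
Qed.


Definition useq n := RInt h 1 (INR n + 1).

Lemma INR_p1_pos n : 0 < INR n + 1.
Proof. pose proof (pos_INR n); lra. Qed.

Lemma chasles_h a b c : 0 < a -> 0 < b -> 0 < c -> RInt h a b + RInt h b c = RInt h a c.
Proof.
  intros. apply (@RInt_Chasles R_CompleteNormedModule h a b c); apply ex_RInt_h; auto.
Qed.

Lemma useq_incr n : useq n <= useq (S n).
Proof.
  unfold useq. rewrite <- (chasles_h 1 (INR n + 1) (INR (S n) + 1)); try lra; try apply INR_p1_pos.
  assert (0 <= RInt h (INR n + 1) (INR (S n) + 1)); [|lra].
  apply RInt_ge_0. rewrite S_INR; lra. apply ex_RInt_h; apply INR_p1_pos.
  intros t Ht. apply Rlt_le, h_pos. pose proof (INR_p1_pos n). lra.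
Qed.

Lemma useq_bd n : useq n <= / (1 * I0' 1 * I0 1).
Proof. apply key_ineq. pose proof (pos_INR n). lra. Qed.

Definition L := real (Lim_seq useq).

Lemma useq_lim : is_lim_seq useq L.
Proof.
  unfold L. apply Lim_seq_correct'. eapply ex_finite_lim_seq_incr. apply useq_incr. apply useq_bd.
Qed.

Definition G x := L - RInt h 1 x.

Lemma G_lim x : 0 < x -> is_lim_seq (fun n => RInt h x (INR n + 1)) (G x).
Proof.
  intros Hx. apply is_lim_seq_ext with (fun n => useq n - RInt h 1 x).
  intros n. unfold useq. rewrite <- (chasles_h 1 x (INR n + 1)); try lra; try apply INR_p1_pos.
  apply is_lim_seq_minus'. apply useq_lim. apply is_lim_seq_const.
Qed.

Lemma G_le x : 0 < x -> G x <= / (x * I0' x * I0 x).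
Proof.
  intros Hx.
  assert (Hb : forall n, RInt h x (INR n + 1) <= / (x * I0' x * I0 x)).
  { intros n. destruct (Rle_dec x (INR n + 1)).
    apply key_ineq; lra.
    assert (0 <= RInt h (INR n + 1) x).
    { apply RInt_ge_0. lra. apply ex_RInt_h; auto; apply INR_p1_pos.
      intros t Ht; apply Rlt_le, h_pos; pose proof (INR_p1_pos n); lra. }
    pose proof (chasles_h x (INR n + 1) x Hx (INR_p1_pos n) Hx).
    rewrite RInt_point in H0. change (RInt h x (INR n + 1) + RInt h (INR n + 1) x = 0) in H0.
    pose proof (I0'_pos x Hx). pose proof (I0_pos x). fold I0' I0 in *.
    assert (0 < / (x * I0' x * I0 x)) by (apply Rinv_0_lt_compat; apply Rmult_lt_0_compat; [apply Rmult_lt_0_compat|]; lra).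
    lra. }
  pose proof (is_lim_seq_le _ _ _ _ Hb (G_lim x Hx) (is_lim_seq_const _)). simpl in H. exact H.
Qed.

Lemma G_pos x : 0 < x -> 0 < G x.
Proof.
  intros Hx.
  assert (Hp : 0 < RInt h x (x + 1)).
  { apply RInt_gt_0. lra. intros; apply h_pos; lra. intros; apply h_cont; lra. }
  assert (Hev : eventually (fun n => RInt h x (x + 1) <= RInt h x (INR n + 1))).
  { destruct (nfloor_ex (x + 1)) as [N HN]. lra.
    exists (S N). intros n Hn. apply le_INR in Hn. rewrite S_INR in Hn.
    rewrite <- (chasles_h x (x+1) (INR n + 1)); try lra; try apply INR_p1_pos.
    assert (0 <= RInt h (x + 1) (INR n + 1)); [|lra].
    apply RInt_ge_0. lra. apply ex_RInt_h; try lra; apply INR_p1_pos.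
    intros t Ht; apply Rlt_le, h_pos; lra. }
  pose proof (is_lim_seq_le_loc _ _ _ _ Hev (is_lim_seq_const _) (G_lim x Hx)). simpl in H. lra.
Qed.

Lemma G_deriv x : 0 < x -> is_derive G x (- h x).
Proof.
  intros Hx. unfold G.
  assert (H : is_derive (fun y => RInt h 1 y) x (h x)).
  { apply (@is_derive_RInt R_CompleteNormedModule h (fun y => RInt h 1 y) 1 x).
    exists (mkposreal (x/2) ltac:(lra)). intros y Hy.
    apply (@RInt_correct R_CompleteNormedModule). apply ex_RInt_h. lra.
    change (Rabs (y - x) < x/2) in Hy. apply Rabs_lt_between in Hy. lra.
    apply h_cont; auto. }
  pose proof (is_derive_minus (fun _ => L) (fun y => RInt h 1 y) x 0 (h x) (is_derive_const L x) H).
  change (minus 0 (h x)) with (0 - h x) in H0. rewrite Rminus_0_l in H0.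
  eapply is_derive_ext; [|exact H0]. intros; reflexivity.
Qed.


Definition v x := I0 x * G x.
Definition v1 x := I0' x * G x - / (x * I0 x).
Definition v2 x := v x - v1 x / x.

Lemma I0_d x : is_derive I0 x (I0' x).
Proof. apply U_deriv, Rabs_1. Qed.
Lemma I0'_d x : 0 < x -> is_derive I0' x (I0 x - I0' x / x).
Proof.
  intros Hx. unfold I0, I0'. rewrite <- (Rmult_1_l (U 1 x)), <- U_ode. apply U1_deriv, Rabs_1.
  apply Rabs_1. lra.
Qed.

Lemma Rmin1 a b : plus a b = a + b. Proof. reflexivity. Qed.

Lemma inv_xI0_d x : 0 < x -> is_derive (fun y => / (y * I0 y)) x (- (I0 x + x * I0' x) / (x * I0 x) ^ 2).
Proof.
  intros Hx. pose proof (I0_pos x). fold I0 in H.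
  apply (is_derive_inv (fun y => y * I0 y)).
  - pose proof (is_derive_mult (fun y => y) I0 x 1 (I0' x) (is_derive_id x) (I0_d x) (fun a b => Rmult_comm a b)).
    replace (I0 x + x * I0' x) with (plus (mult 1 (I0 x)) (mult x (I0' x))).
    eapply is_derive_ext; [|exact H0]. intros; reflexivity.
    change (plus ?a ?b) with (a + b). change (mult ?a ?b) with (a * b).
    match goal with |- ?a = ?b => change (@eq R a b) end. ring.
  - apply Rgt_not_eq, Rmult_lt_0_compat; lra.
Qed.

Lemma v_deriv x : 0 < x -> is_derive v x (v1 x).
Proof.
  intros Hx. unfold v, v1. pose proof (I0_pos x). fold I0 in H.
  pose proof (is_derive_mult I0 G x _ _ (I0_d x) (G_deriv x Hx) (fun a b => Rmult_comm a b)).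
  replace (I0' x * G x - / (x * I0 x)) with (plus (mult (I0' x) (G x)) (mult (I0 x) (- h x))).
  eapply is_derive_ext; [|exact H0]. intros; reflexivity.
  change (plus ?a ?b) with (a + b). change (mult ?a ?b) with (a * b).
  match goal with |- ?a = ?b => change (@eq R a b) end. unfold h. field. split; lra.
Qed.

Lemma v1_deriv x : 0 < x -> is_derive v1 x (v2 x).
Proof.
  intros Hx. unfold v2, v, v1. pose proof (I0_pos x). fold I0 in H.
  pose proof (is_derive_mult I0' G x _ _ (I0'_d x Hx) (G_deriv x Hx) (fun a b => Rmult_comm a b)).
  pose proof (is_derive_minus _ _ x _ _ H0 (inv_xI0_d x Hx)).
  eapply is_derive_ext; [intros; reflexivity|].
  match goal with H : is_derive _ _ ?l |- is_derive _ _ ?m => replace m with l end.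
  exact H1.
  change (minus ?a ?b) with (a - b). change (plus ?a ?b) with (a + b). change (mult ?a ?b) with (a * b).
  match goal with |- ?a = ?b => change (@eq R a b) end. unfold h. field. split; lra.
Qed.

Lemma v_pos x : 0 < x -> 0 < v x.
Proof. intros Hx. unfold v. pose proof (I0_pos x). pose proof (G_pos x Hx). fold I0 in *. nra. Qed.

Lemma v_le x : 0 < x -> v x <= / (x * I0' x).
Proof.
  intros Hx. unfold v. pose proof (I0_pos x). pose proof (G_le x Hx). pose proof (I0'_pos x Hx). fold I0 I0' in *.
  replace (/ (x * I0' x)) with (I0 x * / (x * I0' x * I0 x)) by (field; repeat split; lra).
  apply Rmult_le_compat_l; lra.
Qed.

Lemma v1_le0 x : 0 < x -> v1 x <= 0.
Proof.
  intros Hx. unfold v1. pose proof (I0_pos x). pose proof (G_le x Hx). pose proof (I0'_pos x Hx). fold I0 I0' in *.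
  replace (/ (x * I0 x)) with (I0' x * / (x * I0' x * I0 x)) by (field; repeat split; lra).
  assert (I0' x * G x <= I0' x * / (x * I0' x * I0 x)) by (apply Rmult_le_compat_l; lra). lra.
Qed.

Lemma v2_cpt x : 0 < x -> continuity_pt v2 x.
Proof.
  intros Hx. unfold v2. apply continuity_pt_minus.
  eapply cpt_of_derive, v_deriv, Hx.
  apply continuity_pt_div. eapply cpt_of_derive, v1_deriv, Hx. apply continuity_pt_id. lra.
Qed.


Definition pw (r0 : R) (g h : R -> R) t := if Rle_dec t r0 then g t else h t.

Lemma filter_le_right0 : filter_le (at_right 0) (locally 0).
Proof. intros P [e He]. exists e. intros y Hy _. apply He, Hy. Qed.

Lemma right_cont_of f : continuity_pt f 0 -> filterlim f (at_right 0) (locally (f 0)).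
Proof.
  intros H. apply continuity_pt_filterlim in H. eapply filterlim_filter_le_1; [|exact H].
  apply filter_le_right0.
Qed.

Lemma right_deriv_of f l : is_derive f 0 l -> is_right_derive f 0 l.
Proof.
  intros H. unfold is_right_derive. apply filterlim_locally. intros eps.
  apply is_derive_Reals in H. destruct (H eps (cond_pos eps)) as [d Hd].
  exists d. intros y Hy Hpos. change (Rabs ((f (0 + y) - f 0) / y - l) < eps).
  apply Hd. lra. change (Rabs (y - 0) < d) in Hy. rewrite Rminus_0_r in Hy. exact Hy.
Qed.

Lemma glue_derive g h r0 l : is_derive g r0 l -> is_derive h r0 l -> g r0 = h r0 ->
  is_derive (pw r0 g h) r0 l.
Proof.
  intros Hg Hh E. apply is_derive_Reals in Hg, Hh. apply is_derive_Reals.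
  intros eps He. destruct (Hg eps He) as [d1 H1]. destruct (Hh eps He) as [d2 H2].
  assert (Hd : 0 < Rmin d1 d2) by (apply Rmin_glb_lt; apply cond_pos).
  exists (mkposreal _ Hd). intros y Hy0 Hy. simpl in Hy.
  assert (Rabs y < d1) by (eapply Rlt_le_trans; [exact Hy| apply Rmin_l]).
  assert (Rabs y < d2) by (eapply Rlt_le_trans; [exact Hy| apply Rmin_r]).
  unfold pw. destruct (Rle_dec r0 r0) as [_|n]; [|lra].
  destruct (Rle_dec (r0 + y) r0). apply H1; auto. rewrite E. apply H2; auto.
Qed.

Lemma cpt_of_eps f x : (forall e, 0 < e -> exists d, 0 < d /\ forall y, Rabs (y - x) < d -> Rabs (f y - f x) < e) -> continuity_pt f x.
Proof.
  intros H e He. destruct (H e He) as [d [Hd Hy]]. exists d; split; auto.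
  intros y [_ Hyx]. apply Hy, Hyx.
Qed.

Lemma glue_cpt g h r0 : continuity_pt g r0 -> continuity_pt h r0 -> g r0 = h r0 ->
  continuity_pt (pw r0 g h) r0.
Proof.
  intros Hg Hh E. apply cpt_of_eps. intros e He.
  destruct (cpt_eps g r0 Hg e He) as [d1 [Hd1 H1]]. destruct (cpt_eps h r0 Hh e He) as [d2 [Hd2 H2]].
  exists (Rmin d1 d2). split. apply Rmin_glb_lt; auto. intros y Hy.
  assert (Rabs (y - r0) < d1) by (eapply Rlt_le_trans; [exact Hy| apply Rmin_l]).
  assert (Rabs (y - r0) < d2) by (eapply Rlt_le_trans; [exact Hy| apply Rmin_r]).
  unfold pw. destruct (Rle_dec r0 r0) as [_|n]; [|lra].
  destruct (Rle_dec y r0). apply H1; auto. rewrite E. apply H2; auto.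
Qed.

Lemma loc_left g h r0 x : x < r0 -> locally x (fun t => pw r0 g h t = g t).
Proof.
  intros Hx. exists (mkposreal (r0 - x) ltac:(lra)). intros y Hy.
  change (Rabs (y - x) < r0 - x) in Hy. apply Rabs_lt_between in Hy.
  unfold pw. destruct (Rle_dec y r0); auto; lra.
Qed.

Lemma loc_right g h r0 x : r0 < x -> locally x (fun t => pw r0 g h t = h t).
Proof.
  intros Hx. exists (mkposreal (x - r0) ltac:(lra)). intros y Hy.
  change (Rabs (y - x) < x - r0) in Hy. apply Rabs_lt_between in Hy.
  unfold pw. destruct (Rle_dec y r0); auto; lra.
Qed.

Lemma loc_pos x (P : R -> Prop) : 0 < x -> (forall t, 0 < t -> P t) -> locally x P.
Proof.
  intros Hx H. exists (mkposreal (x/2) ltac:(lra)). intros y Hy.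
  change (Rabs (y - x) < x/2) in Hy. apply Rabs_lt_between in Hy. apply H; lra.
Qed.

Lemma cpt_ext_loc f g x : locally x (fun t => f t = g t) -> continuity_pt f x -> continuity_pt g x.
Proof.
  intros Hl Hf. apply continuity_pt_filterlim. apply continuity_pt_filterlim in Hf.
  apply (continuous_ext_loc g f x). exact Hl. exact Hf.
Qed.

Lemma deriv_comp_lin f df c r : is_derive f (c * r) df -> is_derive (fun t => f (c * t)) r (c * df).
Proof.
  intros H. pose proof (is_derive_comp f (fun t => c * t) r df c H) as H1.
  rewrite scalR in H1. apply H1. 
  assert (E : is_derive (fun t => c * t) r (c * 1)) by (apply is_derive_scal; auto_derive; auto).
  rewrite Rmult_1_r in E. exact E.
Qed.

Lemma deriv_left g h r0 x l : x < r0 -> is_derive g x l -> is_derive (pw r0 g h) x l.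
Proof.
  intros Hx H. apply (is_derive_ext_loc g). destruct (loc_left g h r0 x Hx) as [e He].
  exists e. intros y Hy. symmetry. apply He, Hy. exact H.
Qed.
Lemma deriv_right g h r0 x l : r0 < x -> is_derive h x l -> is_derive (pw r0 g h) x l.
Proof.
  intros Hx H. apply (is_derive_ext_loc h). destruct (loc_right g h r0 x Hx) as [e He].
  exists e. intros y Hy. symmetry. apply He, Hy. exact H.
Qed.
Lemma cpt_left g h r0 x : x < r0 -> continuity_pt g x -> continuity_pt (pw r0 g h) x.
Proof.
  intros Hx H. apply (cpt_ext_loc g). destruct (loc_left g h r0 x Hx) as [e He].
  exists e. intros y Hy. symmetry. apply He, Hy. exact H.
Qed.
Lemma cpt_right g h r0 x : r0 < x -> continuity_pt h x -> continuity_pt (pw r0 g h) x.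
Proof.
  intros Hx H. apply (cpt_ext_loc h). destruct (loc_right g h r0 x Hx) as [e He].
  exists e. intros y Hy. symmetry. apply He, Hy. exact H.
Qed.

Lemma deriv_affine f t df K A : is_derive f t df -> is_derive (fun s => K + A * f s) t (A * df).
Proof.
  intros H. pose proof (is_derive_plus (fun _ => K) (fun s => A * f s) t 0 (A * df) (is_derive_const K t) (is_derive_scal f t A df H)).
  change (plus 0 (A * df)) with (0 + A * df) in H0. rewrite Rplus_0_l in H0. exact H0.
Qed.

Lemma deriv_sq_scal f t l c : is_derive f t l -> is_derive (fun s => c * f s ^ 2) t (c * (2 * f t * l)).
Proof.
  intros H. apply is_derive_scal.
  pose proof (is_derive_mult f f t l l H H (fun a b => Rmult_comm a b)).
  change (plus (mult l (f t)) (mult (f t) l)) with (l * f t + f t * l) in H0.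
  replace (2 * f t * l) with (l * f t + f t * l) by ring.
  eapply is_derive_ext; [|exact H0]. intros s. simpl. change (mult (f s) (f s)) with (f s * f s). ring.
Qed.

Lemma U0_val : U (-1) 0 = 1.
Proof. unfold U. replace (0^2/4) with 0 by field. unfold F. rewrite PSeries_0. unfold cB. simpl. field. Qed.


Lemma match_s beta om : 0 < beta -> 0 < om -> exists x1 s, 0 < s <= x1 /\
  U (-1) s < 0 /\
  (forall p q, 0 <= p < q -> q <= x1 -> U (-1) q < U (-1) p) /\
  beta * v1 (beta * (s/om)) * U (-1) s + beta^2/om * U1 (-1) s * v (beta * (s/om)) = 0.
Proof.
  intros Hb Ho.
  destruct J0_facts as [x0 [x1 [Hx01 [Hux0 [Hu1x1 [Hu1neg Hudec]]]]]].
  set (gg := fun s => beta * v1 (beta * (s/om)) * U (-1) s + beta^2/om * U1 (-1) s * v (beta * (s/om))).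
  assert (Hlin : forall s, continuity_pt (fun s => beta * (s/om)) s).
  { intros s. apply (cpt_of_derive _ _ (beta / om)). auto_derive; auto. field; lra. }
  assert (Hpos : forall s, 0 < s -> 0 < beta * (s/om)).
  { intros s Hs. apply Rmult_lt_0_compat; auto. apply Rdiv_lt_0_compat; auto. }
  assert (Hgc : forall s, 0 < s -> continuity_pt gg s).
  { intros s Hs. unfold gg. apply continuity_pt_plus; apply continuity_pt_mult.
    apply continuity_pt_mult. apply continuity_pt_const; intros ? ?; auto.
    apply (continuity_pt_comp (fun s => beta * (s/om)) v1); auto.
    eapply cpt_of_derive, v1_deriv, Hpos, Hs.
    eapply cpt_of_derive, U_deriv, Rabs_m1.
    apply continuity_pt_mult. apply continuity_pt_const; intros ? ?; auto.
    eapply cpt_of_derive, U1_deriv, Rabs_m1.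
    apply (continuity_pt_comp (fun s => beta * (s/om)) v); auto.
    eapply cpt_of_derive, v_deriv, Hpos, Hs. }
  assert (Hg0 : gg x0 < 0).
  { unfold gg. rewrite Hux0. pose proof (Hu1neg x0 ltac:(lra)). pose proof (v_pos _ (Hpos x0 ltac:(lra))).
    assert (0 < beta^2/om) by (apply Rdiv_lt_0_compat; auto; apply pow_lt; auto).
    assert (0 < beta^2/om * v (beta * (x0/om))) by (apply Rmult_lt_0_compat; auto).
    nra. }
  assert (Hux1 : U (-1) x1 < 0) by (rewrite <- Hux0; apply Hudec; lra).
  assert (Hs : exists s, x0 < s <= x1 /\ gg s = 0).
  { destruct (Req_dec (v1 (beta * (x1/om))) 0) as [E|E].
    - exists x1. split. lra. unfold gg. rewrite E, Hu1x1. ring.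
    - assert (v1 (beta * (x1/om)) < 0) by (pose proof (v1_le0 _ (Hpos x1 ltac:(lra))); lra).
      assert (0 < gg x1).
      { unfold gg; rewrite Hu1x1.
        assert (0 < (- v1 (beta * (x1/om))) * (- U (-1) x1)) by (apply Rmult_lt_0_compat; lra).
        assert (0 < beta * ((- v1 (beta * (x1/om))) * (- U (-1) x1))) by (apply Rmult_lt_0_compat; lra).
        lra. }
      destruct (first_zero gg x0 x1 ltac:(lra) (fun x Hx => Hgc x ltac:(lra)) Hg0 H0) as [c [Hc [Hgc0 _]]].
      exists c. split; [lra| auto]. }
  destruct Hs as [s [Hs1 Hs2]]. exists x1, s. repeat split; try lra.
  rewrite <- Hux0; apply Hudec; lra.
  exact Hudec. exact Hs2.
Qed.


Ltac fside := repeat split; try lra; try (apply pow_nonzero; lra).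

Theorem mainTheorem1 (D chi eps a beta : R)
  (hD : 0 < D) (hchi : 0 < chi) (heps : 0 < eps) (ha : 0 < a) (hbeta : 0 < beta)
  (homega : 0 < a * chi / (D * eps) - beta ^ 2) :
  let b := D * beta ^ 2 in
  exists (rho0 phi0 r0 : R) (rho phi : R -> R),
    0 < rho0 /\ 0 < phi0 /\ 0 < r0 /\
    C0_half rho /\ C2_half phi /\
    (forall r, 0 <= r -> 0 <= rho r) /\
    (forall r, 0 <= r -> 0 <= phi r) /\
    (exists M, forall r, 0 <= r -> Rabs (phi r) <= M) /\
    (forall r, 0 < r ->
       ex_derive (fun s => eps / 2 * (rho s) ^ 2) r /\
       Derive (fun s => eps / 2 * (rho s) ^ 2) r = chi * rho r * Derive phi r) /\
    (forall r, 0 < r ->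
       D * Derive (Derive phi) r + D * Derive phi r / r + a * rho r - b * phi r = 0) /\
    rho 0 = rho0 /\ phi 0 = phi0 /\
    (forall r, 0 <= r < r0 -> 0 < rho r) /\
    (forall r, r0 <= r -> rho r = 0).
Proof.
  intros b.
  set (om := sqrt (a * chi / (D * eps) - beta ^ 2)).
  assert (Hom : 0 < om) by (apply sqrt_lt_R0; lra).
  assert (Hom2 : om ^ 2 = a * chi / (D * eps) - beta ^ 2) by (apply pow2_sqrt; lra).
  destruct (match_s beta om hbeta Hom) as [x1 [s [Hs [HUs [Hudec Hmatch]]]]].
  set (r0 := s / om).
  assert (Hr0 : 0 < r0) by (apply Rdiv_lt_0_compat; lra).
  assert (Homr0 : om * r0 = s) by (unfold r0; field; lra).
  fold r0 in Hmatch.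
  set (Us := U (-1) s) in *.
  set (ps := v (beta * r0)).
  assert (Hps : 0 < ps) by (apply v_pos, Rmult_lt_0_compat; lra).
  set (A := - ps * beta ^ 2 / (om ^ 2 * Us)).
  assert (HA : 0 < A).
  { unfold A. replace (- ps * beta ^ 2 / (om ^ 2 * Us)) with (ps * beta ^ 2 / (om ^ 2 * (- Us))) by (field; split; lra).
    apply Rdiv_lt_0_compat. apply Rmult_lt_0_compat; auto; apply pow_lt; lra.
    apply Rmult_lt_0_compat; [apply pow_lt|]; lra. }
  set (K1 := ps - A * Us).
  assert (HK1 : K1 = ps * (om ^ 2 + beta ^ 2) / om ^ 2).
  { unfold K1, A. field. fside. }
  set (Pin := fun t => K1 + A * U (-1) (om * t)).
  set (Pin1 := fun t => A * (om * U1 (-1) (om * t))).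
  set (Pin2 := fun t => A * (om * (om * U2 (-1) (om * t)))).
  set (Pout := fun t => v (beta * t)).
  set (Pout1 := fun t => beta * v1 (beta * t)).
  set (Pout2 := fun t => beta * (beta * v2 (beta * t))).
  assert (Hr := Rabs_m1).
  assert (Din : forall t, is_derive Pin t (Pin1 t)).
  { intros t. apply deriv_affine, deriv_comp_lin, U_deriv, Hr. }
  assert (D1in : forall t, is_derive Pin1 t (Pin2 t)).
  { intros t. unfold Pin1, Pin2. apply is_derive_scal, is_derive_scal, deriv_comp_lin, U1_deriv, Hr. }
  assert (Cin2 : forall t, continuity_pt Pin2 t).
  { intros t. unfold Pin2. apply (continuity_pt_mult (fun _ => A)). apply continuity_pt_const; intros ? ?; auto.
    apply (continuity_pt_mult (fun _ => om)). apply continuity_pt_const; intros ? ?; auto.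
    apply (continuity_pt_mult (fun _ => om)). apply continuity_pt_const; intros ? ?; auto.
    apply (continuity_pt_comp (fun t => om * t) (U2 (-1))).
    apply (cpt_of_derive _ _ om). auto_derive; auto. ring. apply U2_cont_pt, Hr. }
  assert (Dout : forall t, 0 < t -> is_derive Pout t (Pout1 t)).
  { intros t Ht. apply deriv_comp_lin, v_deriv, Rmult_lt_0_compat; lra. }
  assert (D1out : forall t, 0 < t -> is_derive Pout1 t (Pout2 t)).
  { intros t Ht. unfold Pout1, Pout2. apply is_derive_scal, deriv_comp_lin, v1_deriv, Rmult_lt_0_compat; lra. }
  assert (Cout2 : forall t, 0 < t -> continuity_pt Pout2 t).
  { intros t Ht. unfold Pout2. apply (continuity_pt_mult (fun _ => beta)). apply continuity_pt_const; intros ? ?; auto.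
    apply (continuity_pt_mult (fun _ => beta)). apply continuity_pt_const; intros ? ?; auto.
    apply (continuity_pt_comp (fun t => beta * t) v2).
    apply (cpt_of_derive _ _ beta). auto_derive; auto. ring. apply v2_cpt, Rmult_lt_0_compat; lra. }
  assert (M0 : Pin r0 = Pout r0).
  { unfold Pin, Pout. rewrite Homr0. fold Us ps. unfold K1. ring. }
  assert (M1 : Pin1 r0 = Pout1 r0).
  { unfold Pin1, Pout1. rewrite Homr0. unfold A. fold ps in Hmatch.
    apply Rmult_eq_reg_r with Us; [|lra].
    replace (beta * v1 (beta * r0) * Us) with (- (beta ^ 2 / om * U1 (-1) s * ps)) by lra.
    field. fside. }
  assert (ODEin : forall t, 0 < t -> Pin2 t = - Pin1 t / t - om ^ 2 * (Pin t - K1)).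
  { intros t Ht. unfold Pin2, Pin1, Pin. rewrite U_ode; auto.
    field. lra. apply Rgt_not_eq, Rmult_lt_0_compat; lra. }
  assert (ODEout : forall t, 0 < t -> Pout2 t = beta ^ 2 * Pout t - Pout1 t / t).
  { intros t Ht. unfold Pout2, Pout1, Pout, v2. field. split; lra. }
  assert (M2 : Pin2 r0 = Pout2 r0).
  { rewrite ODEin, ODEout, <- M1, <- M0 by lra. unfold Pin. rewrite Homr0. fold Us. unfold A.
    unfold K1, A. field. fside. }
  assert (Hmono : forall t, 0 <= t <= r0 -> Us <= U (-1) (om * t)).
  { intros t Ht. destruct (Req_dec t r0) as [->|Hne]. rewrite Homr0; unfold Us; lra.
    apply Rlt_le, Hudec. split. apply Rmult_le_pos; lra.
    rewrite <- Homr0. apply Rmult_lt_compat_l; lra. lra. }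
  assert (Hmono' : forall t, 0 <= t < r0 -> Us < U (-1) (om * t)).
  { intros t Ht. apply Hudec. split. apply Rmult_le_pos; lra.
    rewrite <- Homr0. apply Rmult_lt_compat_l; lra. lra. }
  assert (Hmono0 : forall t, 0 <= t <= r0 -> U (-1) (om * t) <= 1).
  { intros t Ht. rewrite <- U0_val. destruct (Req_dec t 0) as [->|Hne].
    rewrite Rmult_0_r; lra. apply Rlt_le, Hudec. split; [lra|].
    apply Rmult_lt_0_compat; lra. apply Rle_trans with s; [rewrite <- Homr0; apply Rmult_le_compat_l; lra| lra]. }
  set (phi := pw r0 Pin Pout).
  set (d1 := pw r0 Pin1 Pout1).
  set (d2 := pw r0 Pin2 Pout2).
  set (rin := fun t => chi / eps * (Pin t - ps)).
  set (rho := pw r0 rin (fun _ => 0)).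
  assert (HD : forall x, 0 < x -> is_derive phi x (d1 x) /\ is_derive d1 x (d2 x) /\ continuity_pt d2 x).
  { intros x Hx. destruct (Rtotal_order x r0) as [Hlt|[Heq|Hgt]].
    - assert (E1 : d1 x = Pin1 x) by (unfold d1, pw; destruct Rle_dec; lra).
      assert (E2 : d2 x = Pin2 x) by (unfold d2, pw; destruct Rle_dec; lra).
      rewrite E1, E2. split; [|split].
      apply deriv_left; auto. apply deriv_left; auto. apply cpt_left; auto.
    - subst x.
      assert (E1 : d1 r0 = Pin1 r0) by (unfold d1, pw; destruct Rle_dec; lra).
      assert (E2 : d2 r0 = Pin2 r0) by (unfold d2, pw; destruct Rle_dec; lra).
      rewrite E1, E2. split; [|split].
      apply glue_derive; auto. rewrite M1; auto.
      apply glue_derive; auto. rewrite M2; auto.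
      apply glue_cpt; auto.
    - assert (E1 : d1 x = Pout1 x) by (unfold d1, pw; destruct Rle_dec; lra).
      assert (E2 : d2 x = Pout2 x) by (unfold d2, pw; destruct Rle_dec; lra).
      rewrite E1, E2. split; [|split].
      apply deriv_right; auto. apply deriv_right; auto. apply cpt_right; auto. }
  assert (Drin : forall t, is_derive rin t (chi / eps * Pin1 t)).
  { intros t. unfold rin. apply is_derive_scal.
    pose proof (is_derive_minus Pin (fun _ => ps) t _ _ (Din t) (is_derive_const ps t)).
    change (minus (Pin1 t) 0) with (Pin1 t - 0) in H. rewrite Rminus_0_r in H. exact H. }
  assert (Crin : forall t, continuity_pt rin t) by (intros t; eapply cpt_of_derive, Drin).
  assert (Hrin0 : rin r0 = 0) by (unfold rin; rewrite M0; unfold Pout; fold ps; ring).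
  assert (Hrin_eq : forall t, rin t = chi / eps * (A * (U (-1) (om * t) - Us))).
  { intros t. unfold rin, Pin, K1. ring. }
  assert (Hrho_in : forall t, t <= r0 -> rho t = rin t) by (intros t Ht; unfold rho, pw; destruct Rle_dec; lra).
  assert (Hrho_out : forall t, r0 < t -> rho t = 0) by (intros t Ht; unfold rho, pw; destruct Rle_dec; lra).
  assert (Hphi_in : forall t, t <= r0 -> phi t = Pin t) by (intros t Ht; unfold phi, pw; destruct Rle_dec; lra).
  assert (Hphi_out : forall t, r0 < t -> phi t = Pout t) by (intros t Ht; unfold phi, pw; destruct Rle_dec; lra).
  assert (Hd1_in : forall t, t <= r0 -> d1 t = Pin1 t) by (intros t Ht; unfold d1, pw; destruct Rle_dec; lra).
  assert (Hd1_out : forall t, r0 < t -> d1 t = Pout1 t) by (intros t Ht; unfold d1, pw; destruct Rle_dec; lra).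
  assert (Hd2_in : forall t, t <= r0 -> d2 t = Pin2 t) by (intros t Ht; unfold d2, pw; destruct Rle_dec; lra).
  assert (Hd2_out : forall t, r0 < t -> d2 t = Pout2 t) by (intros t Ht; unfold d2, pw; destruct Rle_dec; lra).
  assert (HU0 : U (-1) (om * 0) = 1) by (rewrite Rmult_0_r; apply U0_val).
  assert (Hce : 0 < chi / eps) by (apply Rdiv_lt_0_compat; lra).
  assert (Hrin_pos : forall t, 0 <= t < r0 -> 0 < rin t).
  { intros t Ht. rewrite Hrin_eq. pose proof (Hmono' t Ht). apply Rmult_lt_0_compat; auto. apply Rmult_lt_0_compat; lra. }
  assert (Hrin_nn : forall t, 0 <= t <= r0 -> 0 <= rin t).
  { intros t Ht. rewrite Hrin_eq. pose proof (Hmono t Ht). apply Rmult_le_pos; [lra|]. apply Rmult_le_pos; lra. }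
  assert (HPin_ge : forall t, 0 <= t <= r0 -> ps <= Pin t).
  { intros t Ht. pose proof (Hmono t Ht). unfold Pin, K1. nra. }
  assert (HPin_le : forall t, 0 <= t <= r0 -> Pin t <= K1 + A).
  { intros t Ht. pose proof (Hmono0 t Ht). unfold Pin. nra. }
  assert (Hv_pos : forall t, r0 < t -> 0 < Pout t).
  { intros t Ht. unfold Pout. apply v_pos, Rmult_lt_0_compat; lra. }
  set (Mo := / (beta * r0 * I0' (beta * r0))).
  assert (HPout_le : forall t, r0 < t -> Pout t <= Mo).
  { intros t Ht. unfold Pout, Mo. assert (0 < beta * r0) by (apply Rmult_lt_0_compat; lra).
    assert (beta * r0 < beta * t) by (apply Rmult_lt_compat_l; lra).
    eapply Rle_trans. apply v_le; lra.
    pose proof (xI0'_mono (beta * r0) (beta * t) ltac:(lra)). fold I0' in H1.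
    pose proof (I0'_pos (beta * r0) H). fold I0' in H2.
    apply Rinv_le_contravar; auto. apply Rmult_lt_0_compat; lra. }
  exists (rin 0), (Pin 0), r0, rho, phi.
  split. { apply Hrin_pos; lra. }
  split. { pose proof (HPin_ge 0 ltac:(lra)). lra. }
  split. { exact Hr0. }
  split.
  { split.
    - intros x Hx. apply continuity_pt_filterlim. destruct (Rtotal_order x r0) as [Hlt|[Heq|Hgt]].
      + apply cpt_left; auto.
      + subst x. apply glue_cpt; auto. apply continuity_pt_const; intros ? ?; auto.
      + apply cpt_right; auto. apply continuity_pt_const; intros ? ?; auto.
    - apply right_cont_of, cpt_left; auto. }
  split.
  { exists d1, d2. split; [|split; [|split]].
    - intros x Hx. destruct (HD x Hx) as [H1 [H2 H3]]. split; auto. split; auto.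
      apply continuity_pt_filterlim; auto.
    - apply right_deriv_of. rewrite Hd1_in by lra. apply deriv_left; auto.
    - apply right_deriv_of. rewrite Hd2_in by lra. apply deriv_left; auto.
    - apply right_cont_of, cpt_left; auto. }
  split.
  { intros r Hrr. destruct (Rle_dec r r0). rewrite Hrho_in by auto. apply Hrin_nn; lra.
    rewrite Hrho_out by lra. lra. }
  split.
  { intros r Hrr. destruct (Rle_dec r r0). rewrite Hphi_in by auto. pose proof (HPin_ge r ltac:(lra)); lra.
    rewrite Hphi_out by lra. pose proof (Hv_pos r ltac:(lra)); lra. }
  split.
  { exists (K1 + A + Mo). intros r Hrr.
    assert (0 <= Mo).
    { pose proof (Hv_pos (r0 + 1) ltac:(lra)). pose proof (HPout_le (r0+1) ltac:(lra)). lra. }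
    destruct (Rle_dec r r0).
    - rewrite Hphi_in by auto. pose proof (HPin_ge r ltac:(lra)). pose proof (HPin_le r ltac:(lra)).
      rewrite Rabs_pos_eq; lra.
    - rewrite Hphi_out by lra. pose proof (Hv_pos r ltac:(lra)). pose proof (HPout_le r ltac:(lra)).
      assert (0 <= K1 + A) by (pose proof (HPin_ge 0 ltac:(lra)); pose proof (HPin_le 0 ltac:(lra)); lra).
      rewrite Rabs_pos_eq; lra. }
  split.
  { intros r Hrr.
    assert (Hdphi : Derive phi r = d1 r) by (apply is_derive_unique, HD, Hrr).
    rewrite Hdphi.
    set (Fq := fun s => eps / 2 * rho s ^ 2).
    assert (HF : is_derive Fq r (chi * rho r * d1 r)).
    { destruct (Rtotal_order r r0) as [Hlt|[Heq|Hgt]].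
      - rewrite Hrho_in, Hd1_in by lra.
        apply (is_derive_ext_loc (fun s => eps / 2 * rin s ^ 2)).
        destruct (loc_left rin (fun _ => 0) r0 r Hlt) as [e He]. exists e. intros y Hy.
        unfold Fq. fold rho in He. rewrite He; auto.
        replace (chi * rin r * Pin1 r) with (eps / 2 * (2 * rin r * (chi / eps * Pin1 r))) by (field; lra).
        apply deriv_sq_scal, Drin.
      - subst r. rewrite Hrho_in, Hrin0 by lra. rewrite Rmult_0_r, Rmult_0_l.
        apply (is_derive_ext (pw r0 (fun s => eps / 2 * rin s ^ 2) (fun s => eps / 2 * 0 ^ 2))).
        { intros t. unfold Fq, rho, pw. destruct Rle_dec; auto. }
        apply glue_derive.
        + replace 0 with (eps / 2 * (2 * rin r0 * (chi / eps * Pin1 r0))) by (rewrite Hrin0; ring).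
          apply deriv_sq_scal, Drin.
        + apply (is_derive_const (eps / 2 * 0 ^ 2) r0).
        + rewrite Hrin0. reflexivity.
      - rewrite Hrho_out by lra. rewrite Rmult_0_r, Rmult_0_l.
        apply (is_derive_ext_loc (fun s => 0)).
        destruct (loc_right rin (fun _ => 0) r0 r Hgt) as [e He]. exists e. intros y Hy.
        unfold Fq. fold rho in He. rewrite He; auto. simpl; ring.
        auto_derive; auto. }
    split. eexists; exact HF. apply is_derive_unique, HF. }
  split.
  { intros r Hrr.
    destruct (HD r Hrr) as [H1 [H2 H3]].
    assert (Hdphi : Derive phi r = d1 r) by (apply is_derive_unique, H1).
    assert (Hdd : Derive (Derive phi) r = d2 r).
    { rewrite (Derive_ext_loc (Derive phi) d1 r).
      apply is_derive_unique, H2.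
      apply loc_pos; auto. intros t Ht. apply is_derive_unique, HD, Ht. }
    rewrite Hdphi, Hdd. unfold b.
    destruct (Rle_dec r r0).
    - rewrite Hrho_in, Hphi_in, Hd1_in, Hd2_in, ODEin by lra. unfold rin. rewrite HK1, Hom2.
      assert (Hace : 0 < a * chi - beta ^ 2 * (D * eps)).
      { replace (a * chi - beta ^ 2 * (D * eps)) with ((D * eps) * (a * chi / (D * eps) - beta ^ 2)) by (field; lra).
        apply Rmult_lt_0_compat; [apply Rmult_lt_0_compat|]; lra. }
      field. fside.
    - rewrite Hrho_out, Hphi_out, Hd1_out, Hd2_out, ODEout by lra. field. lra. }
  split. { apply Hrho_in; lra. }
  split. { apply Hphi_in; lra. }
  split. { intros r Hrr. rewrite Hrho_in by lra. apply Hrin_pos; auto. }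
  { intros r Hrr. destruct (Req_dec r r0). subst r. rewrite Hrho_in; auto; lra. apply Hrho_out; lra. }
Qed.
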